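(* Let $\mathcal{G}=(V,E)$ be an unweighted simple directed graph, let $i\neq j$ be two distinct nodes of $V$, and let $\phi$ be a spanning converging forest chosen uniformly at random from the set $\mathcal{F}$ of all spanning converging forests of $\mathcal{G}$. Define $$\widetilde{\omega}_{ij}(\phi)=\frac{1}{1+d_j}\sum_{k\in N^-_j}\widehat{\omega}_{ik}(\phi).$$ Then $\widetilde{\omega}_{ij}$ is an unbiased estimator of $\omega_{ij}$, i.e. $\mathbb{E}(\widetilde{\omega}_{ij}(\phi))=\omega_{ij}$, its variance is $${\rm Var}(\widetilde{\omega}_{ij})=\frac{\omega_{ij}}{1+d_j}-\omega_{ij}^2,$$ and this variance is always less than or equal to the variance of the estimator $\widehat{\omega}_{ij}(\phi)$.
   Context: $\mathcal{G}=(V,E)$ has $n$ nodes; $a_{ij}=1$ if $(i,j)\in E$ and $0$ otherwise. $d_i=\sum_j a_{ij}$ is the out-degree of $i$, $\mathbf{D}=\mathrm{diag}(d_1,\dots,d_n)$, $\mathbf{L}=\mathbf{D}-\mathbf{A}$ is the Laplacian, and the forest matrix is $\mathbf{\Omega}=(\mathbf{I}+\mathbf{L})^{-1}=(\omega_{ij})$. $N^-_j=\{k:(k,j)\in E\}$ is the set of in-neighbors of $j$. A rooted converging tree is a weakly connected digraph without cycles in which one node (the root) has out-degree $0$ and every other node has out-degree $1$ (an isolated node is such a tree, rooted at itself). A spanning converging forest of $\mathcal{G}$ is a spanning subgraph (containing all of $V$ and a subset of $E$) whose weakly connected components are rooted converging trees. For such a forest $\phi$ and node $i$, $r_\phi(i)$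 denotes the root of the tree of $\phi$ containing $i$. The basic estimator is $\widehat{\omega}_{ij}(\phi)=\mathbb{I}_{\{r_\phi(i)=j\}}$, which equals $1$ if $r_\phi(i)=j$ and $0$ otherwise. *)

(* Defs.v *)
From HB Require Import structures.
From mathcomp Require Import all_boot all_order all_algebra.
Set Implicit Arguments. Unset Strict Implicit. Unset Printing Implicit Defensive.
Import Order.TTheory GRing.Theory Num.Theory.
Local Open Scope ring_scope.

(* A directed graph on the node set 'I_n is given by its edge relation
   e : rel 'I_n, with a_ij = 1 iff e i j.  Simple = no self-loops
   (multi-edges are impossible in this representation). *)
Definition simple_digraph (n : nat) (e : rel 'I_n) : Prop := irreflexive e.

Definition outdeg (n : nat) (e : rel 'I_n) (i : 'I_n) : nat := #|[set j | e i j]|.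

Section Matrices.
Variables (R : realFieldType) (n : nat) (e : rel 'I_n).
Definition adjmx : 'M[R]_n := \matrix_(i, j) (e i j)%:R.
Definition degmx : 'M[R]_n := \matrix_(i, j) ((i == j)%:R * (outdeg e i)%:R).
Definition laplacian : 'M[R]_n := degmx - adjmx.
Definition forest_matrix : 'M[R]_n := invmx (1%:M + laplacian).
End Matrices.

Section Forests.
Variables (n : nat).
(* a spanning subgraph is given by its edge set *)
Implicit Types (F : {set 'I_n * 'I_n}).

Definition frel F : rel 'I_n := fun x y => (x, y) \in F.
Definition fdeg F (x : 'I_n) : nat := #|[set y | (x, y) \in F]|.
Definition wrel F : rel 'I_n := fun x y => ((x, y) \in F) || ((y, x) \in F).
Definition wcomp F (x : 'I_n) : {set 'I_n} := [set y | connect (wrel F) x y].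

Definition rooted_converging_tree F (C : {set 'I_n}) : bool :=
  [forall y in C, ~~ [exists z, ((y, z) \in F) && connect (frel F) z y]] &&
  [exists r in C, (fdeg F r == 0)%N &&
     [forall y in C, (y != r) ==> (fdeg F y == 1)%N]].

Definition spanning_converging_forest (e : rel 'I_n) F : bool :=
  (F \subset [set p | e p.1 p.2]) &&
  [forall x, rooted_converging_tree F (wcomp F x)].

Definition forests (e : rel 'I_n) : {set {set 'I_n * 'I_n}} :=
  [set F | spanning_converging_forest e F].

Definition froot F (i : 'I_n) : 'I_n :=
  odflt i [pick r | (r \in wcomp F i) && (fdeg F r == 0)%N].
End Forests.

Section Estimators.
Variables (R : realFieldType) (n : nat) (e : rel 'I_n).

(* uniform distribution on the spanning converging forests *)
Definition Exp (X : {set 'I_n * 'I_n} -> R) : R :=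
  (\sum_(F in forests e) X F) / #|forests e|%:R.
Definition Var (X : {set 'I_n * 'I_n} -> R) : R :=
  Exp (fun F => X F ^+ 2) - (Exp X) ^+ 2.

Definition omega_hat (i j : 'I_n) (F : {set 'I_n * 'I_n}) : R :=
  (froot F i == j)%:R.
Definition omega_tilde (i j : 'I_n) (F : {set 'I_n * 'I_n}) : R :=
  (1 + (outdeg e j)%:R)^-1 * \sum_(k | e k j) omega_hat i k F.
End Estimators.

(* Main.v *)
Require Import Defs.
From mathcomp Require Import all_boot all_order all_algebra.
Require Import Defs.
From mathcomp Require Import ring zify lra.
Set Implicit Arguments. Unset Strict Implicit. Unset Printing Implicit Defensive.
Import Order.TTheory GRing.Theory Num.Theory.

Definition pF (n : nat) (F : {set 'I_n * 'I_n}) (x : 'I_n) : 'I_n :=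
  odflt x [pick y | (x, y) \in F].
Definition rt (n : nat) (F : {set 'I_n * 'I_n}) (x : 'I_n) : 'I_n :=
  iter n (pF F) x.

Lemma fdeg_le1P (n : nat) (F : {set 'I_n * 'I_n}) x :
  reflect (forall y y', (x,y) \in F -> (x,y') \in F -> y = y') (fdeg F x <= 1).
Proof.
apply: (iffP card_le1_eqP) => H.
  by move=> a b Ha Hb; symmetry; apply: (H a b); rewrite inE.
move=> y y'; rewrite !inE => Hy Hy'; symmetry; exact: (H y y').
Qed.

Lemma fdeg0P (n : nat) (F : {set 'I_n * 'I_n}) x :
  reflect (forall y, (x,y) \notin F) (fdeg F x == 0).
Proof.
rewrite /fdeg cards_eq0; apply: (iffP eqP) => H.
  move=> y; apply/negP => Hy; suff: y \in (set0 : {set 'I_n}) by rewrite inE. by rewrite -H inE.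
by apply/setP => y; rewrite !inE; apply/negbTE.
Qed.

Lemma connect_frel_sub (n : nat) (G H : {set 'I_n * 'I_n}) :
  G \subset H -> forall x y, connect (frel G) x y -> connect (frel H) x y.
Proof.
move=> sGH x y; apply: connect_sub => a b Hab; apply: connect1.
by rewrite /frel (subsetP sGH).
Qed.

Definition isF (n : nat) (F : {set 'I_n * 'I_n}) : Prop :=
  [/\ forall x, (x,x) \notin F,
      forall x y y', (x,y) \in F -> (x,y') \in F -> y = y'
    & forall y z, (y,z) \in F -> ~~ connect (frel F) z y].

Section ForestTheory.
Variables (n : nat) (F : {set 'I_n * 'I_n}).
Hypothesis HF : isF F.
Let Hirr : forall x, (x,x) \notin F. Proof. by case: HF. Qed.
Let Hdeg : forall x y y', (x,y) \in F -> (x,y') \in F -> y = y'. Proof. by case: HF. Qed.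
Let Hac : forall y z, (y,z) \in F -> ~~ connect (frel F) z y. Proof. by case: HF. Qed.

Lemma pFP x y : (x,y) \in F -> pF F x = y.
Proof.
move=> Hxy; rewrite /pF; case: pickP => [y' Hy'|/(_ y)]; last by rewrite Hxy.
by apply: Hdeg Hxy.
Qed.

Lemma pF_in x : pF F x != x -> (x, pF F x) \in F.
Proof. by rewrite /pF; case: pickP => [y Hy|] //=; rewrite eqxx. Qed.

Lemma pF_fixP x : reflect (forall y, (x,y) \notin F) (pF F x == x).
Proof.
apply: (iffP eqP) => [H y|H].
  apply/negP => Hxy; have := pFP Hxy; rewrite H => Exy.
  by move: Hxy; rewrite -Exy (negbTE (Hirr x)).
by rewrite /pF; case: pickP => [y Hy|] //=; move: (H y); rewrite Hy.
Qed.

Lemma connect_pF x : connect (frel F) x (pF F x).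
Proof.
case: (eqVneq (pF F x) x) => [->|H]; first exact: connect0.
by apply: connect1; apply: pF_in.
Qed.

Lemma connect_iter k x : connect (frel F) x (iter k (pF F) x).
Proof.
elim: k => [|k IH] /=; first exact: connect0.
exact: connect_trans IH (connect_pF _).
Qed.

Lemma rt_fix x : pF F (rt F x) = rt F x.
Proof.
pose g := fun k : 'I_n.+1 => iter k (pF F) x.
have : ~~ injectiveb g.
  apply/negP => /injectiveP /leq_card; rewrite !card_ord ltnn //.
case/injectivePn => a [b Hab Eab].
wlog lab : a b Hab Eab / a < b.
  move=> W; case: (ltngtP a b) => [l|l|/val_inj E]; first exact: (W a b).
  - by apply: (W b a) => //; rewrite eq_sym.
  - by rewrite E eqxx in Hab.
have Hb : iter (b - a) (pF F) (iter a (pF F) x) = iter a (pF F) x.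
  by rewrite -iterD subnK ?(ltnW lab) //; exact: Eab.
set y := iter a (pF F) x in Hb.
have Hy : pF F y = y.
  apply/eqP/negPn/negP => Hne.
  have := Hac (pF_in Hne); rewrite -{2}Hb.
  have -> : (b - a = (b - a).-1.+1)%N by rewrite prednK // subn_gt0.
  by rewrite iterSr connect_iter.
have Han : (a <= n)%N := ltnW (leq_trans lab (ltn_ord b)).
have -> : rt F x = iter (n - a) (pF F) y by rewrite /y -iterD subnK.
by rewrite iter_fix.
Qed.

Lemma rt_pF x : rt F (pF F x) = rt F x.
Proof. by rewrite /rt -iterSr iterS rt_fix. Qed.

Lemma rt_edge y z : (y,z) \in F -> rt F z = rt F y.
Proof. by move/pFP <-; rewrite rt_pF. Qed.

Lemma rt_wconnect x y : connect (wrel F) x y -> rt F x = rt F y.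
Proof.
case/connectP => p Hp ->; elim: p x Hp => [|z p IH] x //= /andP [Hxz Hp].
rewrite -(IH z Hp); case/orP: Hxz => H; first by rewrite (rt_edge H).
by rewrite (rt_edge H).
Qed.

Lemma rt_connect x y : connect (frel F) x y -> rt F x = rt F y.
Proof.
move=> H; apply: rt_wconnect; apply: connect_sub H => a b Hab.
by apply: connect1; apply/orP; left.
Qed.

Lemma connect_rt x : connect (frel F) x (rt F x).
Proof. exact: connect_iter. Qed.

Lemma rt_id x : pF F x = x -> rt F x = x.
Proof. by move=> H; rewrite /rt iter_fix. Qed.

Lemma rt_unique x r : connect (frel F) x r -> pF F r = r -> rt F x = r.
Proof. by move=> /rt_connect -> /rt_id. Qed.

Lemma rt_noout x y : (rt F x, y) \notin F.
Proof. by apply/pF_fixP; rewrite rt_fix. Qed.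

Lemma froot_rt x : froot F x = rt F x.
Proof.
rewrite /froot; case: pickP => [r /andP [Hr H0]|H] /=.
  rewrite inE in Hr; rewrite (rt_wconnect Hr) rt_id //; apply/eqP/pF_fixP.
  by apply/fdeg0P.
have := H (rt F x); rewrite inE.
have -> : fdeg F (rt F x) == 0 by apply/fdeg0P => y; apply: rt_noout.
rewrite andbT; move/negbT/negP; case; apply: connect_sub (connect_rt x) => a b Hab.
by apply: connect1; apply/orP; left.
Qed.

End ForestTheory.


Lemma forestP (n : nat) (e : rel 'I_n) (F : {set 'I_n * 'I_n}) : irreflexive e ->
  F \in forests e <-> (F \subset [set p | e p.1 p.2] /\ isF F).
Proof.
move=> Hirr; rewrite inE /spanning_converging_forest; split.
  case/andP => Hsub /forallP Hall; split => //; split.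
  - move=> x; apply/negP => /(subsetP Hsub); rewrite inE /= Hirr //.
  - move=> x y y'; apply/fdeg_le1P.
    have := Hall x; case/andP => _ /existsP [r /andP [Hr /andP [H0 /forallP H1]]].
    case: (eqVneq x r) => [->|Hxr]; first by rewrite (eqP H0).
    have := H1 x; rewrite inE connect0 /= Hxr /= => /eqP ->; done.
  - move=> y z Hyz; apply/negP => Hc.
    have := Hall y; case/andP => /forallP /(_ y); rewrite inE connect0 /=.
    by move/negP => H _; apply: H; apply/existsP; exists z; rewrite Hyz Hc.
case=> Hsub HF; rewrite Hsub /=; apply/forallP => x; apply/andP; split.
  apply/forallP => y; apply/implyP => _; apply/negP => /existsP [z /andP [Hyz Hc]].
  by case: HF => _ _ /(_ y z Hyz); rewrite Hc.
apply/existsP; exists (rt F x); rewrite inE.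
have Hw : forall a b, connect (frel F) a b -> connect (wrel F) a b.
  by move=> a b; apply: connect_sub => c d Hcd; apply: connect1; apply/orP; left.
rewrite Hw ?connect_rt //=.
have -> /= : fdeg F (rt F x) == 0 by apply/fdeg0P => y; exact: rt_noout.
apply/forallP => y; apply/implyP; rewrite inE => Hy; apply/implyP => Hne.
rewrite eqn_leq; apply/andP; split; first by apply/fdeg_le1P => a b; case: HF => _ Hd _; exact: Hd.
rewrite lt0n; apply/negP => /fdeg0P H0.
have : pF F y = y by apply/eqP/pF_fixP.
move/rt_id; rewrite -(rt_wconnect HF Hy) => E.
by rewrite E eqxx in Hne.
Qed.

Lemma isF_sub (n : nat) (G H : {set 'I_n * 'I_n}) : G \subset H -> isF H -> isF G.
Proof.
move=> sGH [Hirr Hdeg Hac]; split.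
- by move=> x; apply/negP => /(subsetP sGH); apply/negP.
- by move=> x y y' /(subsetP sGH) H1 /(subsetP sGH) H2; apply: Hdeg H1 H2.
- move=> y z /(subsetP sGH) Hyz; apply/negP => /(connect_frel_sub sGH) Hc.
  by have := Hac y z Hyz; rewrite Hc.
Qed.

Lemma connect_add (n : nat) (G : {set 'I_n * 'I_n}) i l a b :
  connect (frel ((i,l) |: G)) a b ->
  connect (frel G) a b \/ (connect (frel G) a i /\ connect (frel G) l b).
Proof.
case/connectP => p Hp ->; elim: p a Hp => [|c p IH] a /=; first by left; exact: connect0.
case/andP => Hac Hp; have := IH c Hp; rewrite /frel in_setU1 in Hac.
case/orP: Hac => [/eqP [-> ->]|Hac].
  by case=> [H|[_ H]]; right; split => //; exact: connect0.
case=> [H|[H1 H2]]; [left|right]; first exact: connect_trans (connect1 Hac) H.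
by split => //; exact: connect_trans (connect1 Hac) H1.
Qed.

Section AddEdge.
Variables (n : nat) (G : {set 'I_n * 'I_n}) (i l : 'I_n).
Hypothesis HG : isF G.
Hypothesis Hi : pF G i = i.
Hypothesis Hli : l != i.
Hypothesis Hrl : rt G l != i.

Let noi : forall y, (i,y) \notin G. Proof. by apply/pF_fixP => //; rewrite Hi. Qed.

Let nocl : ~~ connect (frel G) l i.
Proof.
apply/negP => /(rt_connect HG); rewrite (rt_id Hi) => E.
by move: Hrl; rewrite E eqxx.
Qed.

Lemma isF_add : isF ((i,l) |: G).
Proof.
case: (HG) => Hirr Hdeg Hac; split.
- move=> x; rewrite in_setU1 negb_or Hirr andbT; apply/negP => /eqP [E1 E2].
  by move: Hli; rewrite -E2 E1 eqxx.
- move=> x y y'; rewrite !in_setU1.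
  case/orP => [/eqP [-> ->]|H1]; case/orP => [/eqP E|H2]; first by case: E.
  + by have := noi y'; rewrite H2.
  + by case: E H1 => -> _ H1; have := noi y; rewrite H1.
  + exact: Hdeg H1 H2.
- move=> y z; rewrite in_setU1; case/orP => [/eqP [-> ->]|Hyz]; apply/negP.
    by case/connect_add => [H|[_ H]]; move: nocl; rewrite H.
  case/connect_add => [H|[H1 H2]]; first by have := Hac y z Hyz; rewrite H.
  move: nocl; rewrite (connect_trans H2 (connect_trans (connect1 Hyz) H1)) //.
Qed.

Lemma rt_add x : rt ((i,l) |: G) x = if rt G x == i then rt G l else rt G x.
Proof.
have HH := isF_add.
have sub : G \subset (i,l) |: G by apply/subsetP => p Hp; rewrite in_setU1 Hp orbT.
case: ifP => Hx.
  apply: (rt_unique HH).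
    apply: (connect_trans (connect_frel_sub sub (connect_rt G x))).
    rewrite (eqP Hx); apply: (connect_trans (connect1 _)) (connect_frel_sub sub (connect_rt G l)).
    by rewrite /frel in_setU1 eqxx.
  apply/eqP/pF_fixP => // y; rewrite in_setU1 negb_or rt_noout // andbT.
  by apply/negP => /eqP [E _]; move: Hrl; rewrite E eqxx.
apply: (rt_unique HH); first exact: (connect_frel_sub sub (connect_rt G x)).
apply/eqP/pF_fixP => // y; rewrite in_setU1 negb_or rt_noout // andbT.
by apply/negP => /eqP [E _]; rewrite E eqxx in Hx.
Qed.

End AddEdge.

Section DelEdge.
Variables (n : nat) (F : {set 'I_n * 'I_n}) (i l : 'I_n).
Hypothesis HF : isF F.
Hypothesis Hil : (i,l) \in F.

Lemma isF_del : isF (F :\ (i,l)).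
Proof. by apply: isF_sub HF; apply/subsetP => p; rewrite in_setD1 => /andP []. Qed.

Lemma pF_del : pF (F :\ (i,l)) i = i.
Proof.
apply/eqP/pF_fixP; first exact: isF_del.
move=> y; rewrite in_setD1; apply/negP => /andP [Hne Hy].
case: HF => _ Hdeg _; have E := Hdeg _ _ _ Hy Hil.
by rewrite E eqxx in Hne.
Qed.

Lemma rt_del : rt (F :\ (i,l)) l != i.
Proof.
apply/eqP => E.
have := connect_rt (F :\ (i,l)) l; rewrite E => /(connect_frel_sub (subD1set F (i,l))) Hc.
by case: HF => _ _ /(_ i l Hil); rewrite Hc.
Qed.

End DelEdge.

Section Count.
Variables (n : nat) (e : rel 'I_n).
Hypothesis He : irreflexive e.
Variable (i : 'I_n).

Lemma forest_isF F : F \in forests e -> isF F.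
Proof. by case/(forestP _ He). Qed.

Lemma decomp (h : {set 'I_n * 'I_n} -> nat) :
  \sum_(F in forests e) h F =
  \sum_(G in forests e | pF G i == i)
     (h G + \sum_(l | e i l && (rt G l != i)) h ((i,l) |: G)).
Proof.
rewrite (bigID (fun F => pF F i == i)) /= big_split /=; congr (_ + _).
rewrite (partition_big (fun F => pF F i) predT) //=.
rewrite [RHS](exchange_big_dep predT) //=.
apply: eq_bigr => l _.
rewrite (reindex_onto (fun G => (i,l) |: G) (fun F => F :\ (i,l))) /=; last first.
  move=> F /andP [/andP [HF Hne] /eqP Hl]; apply: setD1K.
  by rewrite -Hl; apply: pF_in.
apply: eq_bigl => G; apply/idP/idP.
  move=> /andP [/andP [/andP [HF Hne] Hl] /eqP HG].
  have [Hsub HisF] := (forestP _ He).1 HF.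
  have Hin : (i,l) \in (i,l) |: G by rewrite setU11.
  rewrite -HG; apply/andP; split; first (apply/andP; split).
  - apply/(forestP _ He); split; last exact: isF_del.
    exact: subset_trans (subD1set _ _) Hsub.
  - by rewrite pF_del.
  - apply/andP; split; last exact: rt_del.
    by have := subsetP Hsub _ Hin; rewrite inE.
move=> /andP [/andP [HG Hi] /andP [Hel Hrl]].
have [Hsub HisG] := (forestP _ He).1 HG.
have Hli : l != i by apply/eqP => E; move: Hel; rewrite E He.
have HisF := isF_add HisG (eqP Hi) Hli Hrl.
have Hpl : pF ((i,l) |: G) i = l by apply: (pFP HisF); rewrite setU11.
rewrite Hpl eqxx Hli andbT setU1K; last by apply: (elimT (pF_fixP HisG i)).
rewrite eqxx !andbT; apply/(forestP _ He); split => //.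
apply/subsetP => p; rewrite in_setU1 => /orP [/eqP ->|/(subsetP Hsub)] //.
by rewrite inE.
Qed.

Definition Scnt (x y : 'I_n) : nat := \sum_(F in forests e) (froot F x == y).

Lemma key (y : 'I_n) :
  ((1 + outdeg e i) * Scnt i y = (i == y) * #|forests e| + \sum_(k | e i k) Scnt k y)%N.
Proof.
rewrite /Scnt big_distrr /= -sum1_card big_distrr /= muln1.
rewrite [in RHS]exchange_big /= -big_split /=.
have -> : \sum_(F in forests e) (1 + outdeg e i) * (froot F i == y) =
          \sum_(F in forests e) (1 + outdeg e i) * (rt F i == y).
  by apply: eq_bigr => F /forest_isF HF; rewrite froot_rt.
have -> : \sum_(F in forests e) ((i == y) + \sum_(k | e i k) (froot F k == y)) =
          \sum_(F in forests e) ((i == y) + \sum_(k | e i k) (rt F k == y)).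
  by apply: eq_bigr => F /forest_isF HF; congr (_ + _); apply: eq_bigr => k _; rewrite froot_rt.
rewrite !decomp; apply: eq_bigr => G /andP [/forest_isF HG /eqP Hi].
set r := rt G.
have Hri : r i = i by apply: rt_id.
pose b := \sum_(k | e i k && (r k == i)) 1.
pose a := \sum_(k | e i k && (r k != i)) (r k == y).
pose m := \sum_(k | e i k && (r k != i)) 1.
have Ed : outdeg e i = b + m.
  rewrite /outdeg -sum1_card (bigID (fun k => r k == i)) /=.
  by congr (_ + _); apply: eq_bigl => k; rewrite inE.
have E1 : \sum_(k | e i k) (r k == y) = b * (i == y) + a.
  rewrite (bigID (fun k => r k == i)) /=; congr (_ + _).
  by rewrite big_distrl /=; apply: eq_bigr => k /andP [_ /eqP ->]; rewrite mul1n.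
have E2 : forall l, \sum_(k | e i k)
     (rt ((i,l) |: G) k == y) = if (e i l && (r l != i)) then b * (r l == y) + a
                                else \sum_(k | e i k) (rt ((i,l) |: G) k == y).
  move=> l; case: ifP => // /andP [Hel Hrl].
  have Hli : l != i by apply/eqP => E; move: Hel; rewrite E He.
  rewrite (bigID (fun k => r k == i)) /=; congr (_ + _).
    rewrite big_distrl /=; apply: eq_bigr => k /andP [_ Hk].
    by rewrite (rt_add HG Hi Hli Hrl) -/r Hk mul1n.
  by apply: eq_bigr => k /andP [_ Hk]; rewrite (rt_add HG Hi Hli Hrl) -/r (negbTE Hk).
have -> : \sum_(l | e i l && (r l != i)) ((i == y) + \sum_(k | e i k) (rt ((i,l) |: G) k == y))
   = m * (i == y) + b * a + m * a.
  rewrite (eq_bigr (fun l => (i == y) + (b * (r l == y) + a))); last first.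
    by move=> l Hl; rewrite E2 Hl.
  have S1 : forall c, \sum_(l | e i l && (r l != i)) c = m * c.
    by move=> c; rewrite /m big_distrl /=; apply: eq_bigr => *; rewrite mul1n.
  rewrite !big_split /= !S1 -big_distrr /= -/a; ring.
have -> : \sum_(l | e i l && (r l != i)) (1 + outdeg e i) * (rt ((i,l) |: G) i == y)
   = (1 + outdeg e i) * a.
  rewrite big_distrr /=; apply: eq_bigr => l /andP [Hel Hrl].
  have Hli : l != i by apply/eqP => E; move: Hel; rewrite E He.
  by rewrite (rt_add HG Hi Hli Hrl) -/r Hri eqxx.
rewrite -/r E1 Hri Ed; ring.
Qed.

End Count.

Local Open Scope ring_scope.

Section Final.
Variables (R : realFieldType) (n : nat) (e : rel 'I_n).
Hypothesis He : irreflexive e.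

Lemma set0_forest : set0 \in forests e.
Proof.
apply/(forestP _ He); split; first exact: sub0set.
by split => [x|x y y'|y z]; rewrite in_set0.
Qed.

Let N : R := (#|forests e|)%:R.
Let NneqR : N != 0.
Proof.
rewrite /N pnatr_eq0 -lt0n; apply/card_gt0P; exists set0; exact: set0_forest.
Qed.

Definition Mf : 'M[R]_n := \matrix_(x, y) ((Scnt e x y)%:R / N).

Lemma ent x k : (1%:M + laplacian R e) x k =
  (x == k)%:R * (1 + (outdeg e x)%:R) - (e x k)%:R.
Proof.
rewrite /laplacian /degmx /adjmx !mxE.
case: (eqVneq x k) => [<-|H] /=; first by rewrite He /=; ring.
by rewrite mulr0n !mul0r add0r sub0r.
Qed.

Lemma ent' x k : (1%:M + laplacian R e) k x =
  (k == x)%:R * (1 + (outdeg e x)%:R) - (e k x)%:R.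
Proof.
rewrite ent; case: (eqVneq k x) => [->|H] //=; by rewrite !mul0r.
Qed.

Lemma sum_e (x : 'I_n) (F : 'I_n -> R) :
  \sum_k (e x k)%:R * F k = \sum_(k | e x k) F k.
Proof. by rewrite [RHS]big_mkcond; apply: eq_bigr => k _; case: (e x k); rewrite ?mul1r ?mul0r. Qed.

Lemma sum_e' (x : 'I_n) (F : 'I_n -> R) :
  \sum_k F k * (e k x)%:R = \sum_(k | e k x) F k.
Proof. by rewrite [RHS]big_mkcond; apply: eq_bigr => k _; case: (e k x); rewrite ?mulr1 ?mulr0. Qed.

Lemma mulLM : (1%:M + laplacian R e) *m Mf = 1%:M.
Proof.
apply/matrixP => x y; rewrite [RHS]mxE !mxE.
under eq_bigr => k _ do rewrite ent mulrBl.
rewrite sumrB sum_e (bigD1 x) //= eqxx big1 ?addr0; last first.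
  by move=> k /negbTE Hk; rewrite eq_sym Hk !mul0r.
under eq_bigr => k _ do rewrite mxE.
rewrite -mulr_suml -natr_sum mxE mul1r mulrA -mulrBl.
have K : (((1 + outdeg e x) * Scnt e x y)%N%:R : R) =
  (((x == y) * #|forests e| + \sum_(k | e x k) Scnt e k y)%N)%:R by rewrite key.
rewrite !(natrM, natrD) mulr1n in K.
by rewrite K addrK mulfK.
Qed.

Lemma forest_matrixE : forest_matrix R e = Mf.
Proof.
have [U _] := mulmx1_unit mulLM.
by rewrite /forest_matrix -[RHS](mulKmx U) mulLM mulmx1.
Qed.

Lemma colsum x y : x != y ->
  \sum_(k | e k y) Mf x k = (1 + (outdeg e y)%:R) * Mf x y.
Proof.
move=> Hxy; have := congr1 (fun A : 'M[R]_n => A x y) (mulmx1C mulLM).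
rewrite /= [in RHS]mxE (negbTE Hxy) /= mxE => H.
have : \sum_j (Mf x j * ((j == y)%:R * (1 + (outdeg e y)%:R)) - Mf x j * (e j y)%:R) = 0.
  by apply: (etrans _ H); apply: eq_bigr => k _; rewrite ent' mulrBr.
rewrite sumrB sum_e' (bigD1 y) //= eqxx big1 ?addr0; last first.
  by move=> k /negbTE Hk; rewrite Hk !mul0r mulr0.
move/eqP; rewrite mul1r subr_eq0 => /eqP <-.
by rewrite mulrC.
Qed.

Lemma ExpE x y : Exp e (omega_hat R x y) = Mf x y.
Proof. by rewrite /Exp mxE natr_sum. Qed.

Lemma Exp_scale c (X : {set 'I_n * 'I_n} -> R) :
  Exp e (fun F => c * X F) = c * Exp e X.
Proof. by rewrite /Exp -mulr_sumr mulrA. Qed.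

Lemma Exp_sum (P : pred 'I_n) (X : 'I_n -> {set 'I_n * 'I_n} -> R) :
  Exp e (fun F => \sum_(k | P k) X k F) = \sum_(k | P k) Exp e (X k).
Proof. by rewrite /Exp exchange_big mulr_suml. Qed.

Lemma Mf_ge0 x y : 0 <= Mf x y.
Proof. by rewrite mxE divr_ge0 // ler0n. Qed.

End Final.

Lemma Exp_ext (R : realFieldType) (n : nat) (e : rel 'I_n) (X Y : {set 'I_n * 'I_n} -> R) :
  (forall F, X F = Y F) -> Exp e X = Exp e Y.
Proof. by move=> H; rewrite /Exp; congr (_ / _); apply: eq_bigr => F _. Qed.

Theorem lemma4p1 (R : realFieldType) (n : nat) (e : rel 'I_n) (i j : 'I_n) :
  simple_digraph e -> i != j ->
  let Omega := forest_matrix R e in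
  [/\ Exp e (omega_tilde R e i j) = Omega i j,
      Var e (omega_tilde R e i j) =
        Omega i j / (1 + (outdeg e j)%:R) - (Omega i j) ^+ 2
    & Var e (omega_tilde R e i j) <= Var e (omega_hat R i j)].
Proof.
move=> He Hij Omega.
have HOm : Omega = Mf R e by rewrite /Omega forest_matrixE.
set c := (1 + (outdeg e j)%:R)^-1 : R.
have Hd0 : 0 < 1 + (outdeg e j)%:R :> R by have := ler0n R (outdeg e j); lra.
have Hd : 1 + (outdeg e j)%:R != 0 :> R by rewrite lt0r_neq0.
have Ht : forall F, omega_tilde R e i j F = c * (e (froot F i) j)%:R.
  move=> F; rewrite /omega_tilde; congr (_ * _).
  rewrite /omega_hat big_mkcond (bigD1 (froot F i)) //= eqxx big1 ?addr0.
    by case: (e _ _).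
  by move=> k Hk; rewrite eq_sym (negbTE Hk); case: (e k j).
have E1 : Exp e (omega_tilde R e i j) = Omega i j.
  rewrite (@Exp_ext R n e _ (fun F => c * \sum_(k | e k j) omega_hat R i k F)) //.
  rewrite Exp_scale Exp_sum.
  under eq_bigr => k _ do rewrite ExpE.
  by rewrite colsum // mulrA mulVf // mul1r HOm.
have E2 : Exp e (fun F => omega_tilde R e i j F ^+ 2) = c * Omega i j.
  rewrite (@Exp_ext R n e _ (fun F => c * omega_tilde R e i j F)); first by rewrite Exp_scale E1.
  by move=> F; rewrite Ht expr2; case: (e _ _); rewrite ?mulr1 ?mulr0.
have E3 : Exp e (fun F => omega_hat R i j F ^+ 2) = Omega i j.
  rewrite (@Exp_ext R n e _ (omega_hat R i j)); first by rewrite ExpE HOm.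
  by move=> F; rewrite /omega_hat expr2; case: (_ == _); rewrite ?mulr1 ?mulr0.
have Vt : Var e (omega_tilde R e i j) = c * Omega i j - Omega i j ^+ 2.
  by rewrite /Var E2 E1.
split => //; first by rewrite Vt mulrC.
rewrite Vt /Var E3 ExpE -HOm lerD2r ler_piMl //.
  by rewrite HOm Mf_ge0.
by rewrite invf_le1 //; have := ler0n R (outdeg e j); lra.
Qed.
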